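(* Let $L$ be an operator of order $n>0$ in normal form in $A_1(\mathbf{C})$, and consider its test-filtration $\delta_{p,q}$. Assume that the symbol $\sigma(L)\in\mathbf{C}[\chi,\xi]$ is a power of an irreducible polynomial $g\in\mathbf{C}[\chi,\xi]$. Then for every nonzero $M$ in the centralizer $\mathcal{C}(L)=\{M\in A_1(\mathbf{C}):[L,M]=0\}$, the symbol $\sigma(M)$ is (a nonzero constant multiple of) a power of $g$.
   Context: $A_1(\mathbf{C})$ is the first Weyl algebra of operators $P=\sum a_{ij}x^i\partial^j$, $[\partial,x]=1$; normal form means $P=\partial^n+u_{n-2}\partial^{n-2}+\dots+u_0$. Newton diagram $\mathcal{N}(P)=\{(i,j):a_{ij}\neq0\}$. For nonnegative integers $p,q$, $p+q>0$, $\Lambda_{p,q}(i,j)=pi+qj$, $\delta_{p,q}(P)=\max_{(i,j)\in\mathcal{N}(P)}\Lambda_{p,q}(i,j)$, and the symbol of $P$ is the polynomial $\sigma(P)=\sum_{\Lambda_{p,q}(i,j)=\delta_{p,q}(P)}a_{ij}\chi^i\xi^j\in\mathbf{C}[\chi,\xi]$. The test-filtration for $L\neq\partial^n$ is the $\delta_{p,q}$ for the (up to scaling unique) linear form with $\delta_{p,q}(L)=\Lambda_{p,q}(0,n)=\Lambda_{p,q}(a,b)$ for some $(a,b)\in\mathcal{N}(L)\setminus\{(0,n)\}$. *)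

(* Defs.v *)
From HB Require Import structures.
From mathcomp Require Import all_boot all_order all_algebra.
Set Implicit Arguments. Unset Strict Implicit. Unset Printing Implicit Defensive.
Import Order.TTheory GRing.Theory Num.Theory.
Local Open Scope ring_scope.

(* Elements P = \sum a_ij x^i d^j of the Weyl algebra A_1(F), stored in
   normal-ordered form as P : {poly {poly F}}: the outer variable is the
   derivation d (xi), the inner variable is x (chi), so a_ij = P`_j`_i.
   The same type, with its commutative product, is F[chi, xi]. *)

Definition wcoef (F : fieldType) (P : {poly {poly F}}) (i j : nat) : F :=
  (P`_j)`_i.

(* Product of the Weyl algebra in normal-ordered form:
   P * Q = \sum_t (1/t!) (d_xi^t P) (d_chi^t Q)  (commutative products),
   which is the normal-ordering rule  d^j x^k = \sum_t C(j,t) k^_t x^(k-t) d^(j-t),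
   i.e. [d, x] = 1. *)
Definition wmul (F : fieldType) (P Q : {poly {poly F}}) : {poly {poly F}} :=
  \sum_(t < size P) P^`N(t) * map_poly (fun c : {poly F} => c^`(t)) Q.

Definition wdelta (F : fieldType) (p q : nat) (P : {poly {poly F}}) : nat :=
  \big[maxn/0%N]_(j < size P)
    \big[maxn/0%N]_(i < size P`_j | wcoef P i j != 0) (p * i + q * j)%N.

Definition wsymbol (F : fieldType) (p q : nat) (P : {poly {poly F}})
  : {poly {poly F}} :=
  \poly_(j < size P) \poly_(i < size P`_j)
     (if (p * i + q * j == wdelta p q P)%N then wcoef P i j else 0).

Definition birreducible (F : fieldType) (g : {poly {poly F}}) : Prop :=
  [/\ g != 0, g \isn't a GRing.unit &
      forall a b : {poly {poly F}}, g = a * b ->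
        a \is a GRing.unit \/ b \is a GRing.unit].

(* Main.v *)
Require Import Defs.
From HB Require Import structures.
From mathcomp Require Import all_boot all_order all_algebra.
From mathcomp Require Import ring zify.
From Stdlib Require Import Classical_Prop.
Set Implicit Arguments. Unset Strict Implicit. Unset Printing Implicit Defensive.
Import Order.TTheory GRing.Theory Num.Theory.
Local Open Scope ring_scope.
Section Char0.
Variable R : idomainType.
Hypothesis c0 : [pchar R] =i pred0.
Lemma natr_eq0c (n : nat) : (n%:R == 0 :> R) = (n == 0%N).
Proof. by move/pcharf0P: c0 => ->. Qed.
Lemma natr_injc (a b : nat) : a%:R = b%:R :> R -> a = b.
Proof.
move=> e; apply/eqP; rewrite eqn_leq; apply/andP; split; rewrite leqNgt; apply/negP => lt.
  have : ((a - b)%:R == 0 :> R) by rewrite natrB ?(ltnW lt) // e subrr.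
  by rewrite natr_eq0c subn_eq0 leqNgt lt.
have : ((b - a)%:R == 0 :> R) by rewrite natrB ?(ltnW lt) // e subrr.
by rewrite natr_eq0c subn_eq0 leqNgt lt.
Qed.
Lemma mulrn_injc (x : R) (a b : nat) : x != 0 -> x *+ a = x *+ b -> a = b.
Proof.
move=> x0; rewrite -[x *+ a]mulr_natr -[x *+ b]mulr_natr => /(mulfI x0); exact: natr_injc.
Qed.
Lemma mulrn_eq0c (x : R) (a : nat) : (x *+ a == 0) = (a == 0%N) || (x == 0).
Proof. by rewrite -[x *+ a]mulr_natr mulf_eq0 natr_eq0c orbC. Qed.
End Char0.

Lemma sum_neq0 (R : nzRingType) (n : nat) (f : 'I_n -> R) :
  \sum_(k < n) f k != 0 -> exists k, f k != 0.
Proof.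
move=> H; apply: NNPP => nH; move/eqP: H; apply; apply: big1 => k _.
by case: (f k =P 0) => // /eqP h; exfalso; apply: nH; exists k.
Qed.

Section W.
Variable F : fieldType.
Variables p q : nat.
Local Notation R2 := {poly {poly F}}.

Definition supp (P : R2) (Rl : nat -> nat -> Prop) :=
  forall i j, wcoef P i j != 0 -> Rl i j.

Lemma wcoefD (P Q : R2) i j : wcoef (P + Q) i j = wcoef P i j + wcoef Q i j.
Proof. by rewrite /wcoef !coefD. Qed.
Lemma wcoefN (P : R2) i j : wcoef (- P) i j = - wcoef P i j.
Proof. by rewrite /wcoef !coefN. Qed.
Lemma wcoefB (P Q : R2) i j : wcoef (P - Q) i j = wcoef P i j - wcoef Q i j.
Proof. by rewrite /wcoef !coefB. Qed.
Lemma wcoefMn (P : R2) i j k : wcoef (P *+ k) i j = wcoef P i j *+ k.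
Proof. by rewrite /wcoef !coefMn. Qed.
Lemma wcoef0 i j : wcoef (0 : R2) i j = 0.
Proof. by rewrite /wcoef !coef0. Qed.
Lemma wcoef_sum I (r : seq I) (Pr : pred I) (G : I -> R2) i j :
  wcoef (\sum_(k <- r | Pr k) G k) i j = \sum_(k <- r | Pr k) wcoef (G k) i j.
Proof. by rewrite /wcoef !coef_sum. Qed.

Lemma supp_mono (P : R2) (R1 R2' : nat -> nat -> Prop) :
  (forall i j, R1 i j -> R2' i j) -> supp P R1 -> supp P R2'.
Proof. by move=> H sP i j /sP /H. Qed.
Lemma supp0 Rl : supp 0 Rl.
Proof. by move=> i j; rewrite wcoef0 eqxx. Qed.
Lemma suppD (P Q : R2) Rl : supp P Rl -> supp Q Rl -> supp (P + Q) Rl.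
Proof.
move=> sP sQ i j; rewrite wcoefD.
case: (wcoef P i j =P 0) => [->|/eqP/sP//]; rewrite add0r; exact: sQ.
Qed.
Lemma suppN (P : R2) Rl : supp P Rl -> supp (- P) Rl.
Proof. by move=> sP i j; rewrite wcoefN oppr_eq0; exact: sP. Qed.
Lemma suppB (P Q : R2) Rl : supp P Rl -> supp Q Rl -> supp (P - Q) Rl.
Proof. by move=> sP sQ; apply: suppD => //; exact: suppN. Qed.
Lemma suppMn (P : R2) Rl k : supp P Rl -> supp (P *+ k) Rl.
Proof.
move=> sP i j; rewrite wcoefMn; case: (wcoef P i j =P 0) => [->|/eqP/sP//].
by rewrite mul0rn eqxx.
Qed.
Lemma supp_sum I (r : seq I) (Pr : pred I) (G : I -> R2) Rl :
  (forall k, Pr k -> supp (G k) Rl) -> supp (\sum_(k <- r | Pr k) G k) Rl.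
Proof.
move=> H; elim/big_rec: _; first exact: supp0.
by move=> k x Pk sx; apply: suppD => //; exact: H.
Qed.

Lemma suppM (P Q : R2) (R1 R2' R3 : nat -> nat -> Prop) :
  supp P R1 -> supp Q R2' ->
  (forall i1 j1 i2 j2, R1 i1 j1 -> R2' i2 j2 -> R3 (i1 + i2)%N (j1 + j2)%N) ->
  supp (P * Q) R3.
Proof.
move=> sP sQ H i j; rewrite /wcoef coefM coef_sum => /sum_neq0 [a].
rewrite coefM => /sum_neq0 [b]; rewrite mulf_eq0 negb_or => /andP [h1 h2].
have := H _ _ _ _ (sP _ _ h1) (sQ _ _ h2).
have ha : (a <= j)%N by rewrite -ltnS ltn_ord.
have hb : (b <= i)%N by rewrite -ltnS ltn_ord.
by rewrite !subnKC.
Qed.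

Definition xd (P : R2) : R2 := P^`().
Definition cd (P : R2) : R2 := map_poly (@deriv F) P.

Lemma wcoef_xd (P : R2) i j : wcoef (xd P) i j = wcoef P i j.+1 *+ j.+1.
Proof. by rewrite /wcoef /xd coef_deriv coefMn. Qed.
Lemma wcoef_cd (P : R2) i j : wcoef (cd P) i j = wcoef P i.+1 j *+ i.+1.
Proof. by rewrite /wcoef /cd coef_map_id0 ?deriv0 // coef_deriv. Qed.
Lemma wcoef_nderivn (P : R2) t i j :
  wcoef (P^`N(t)) i j = wcoef P i (t + j) *+ 'C(t + j, t).
Proof. by rewrite /wcoef coef_nderivn coefMn. Qed.
Lemma derivn0p t : (0 : {poly F})^`(t) = 0.
Proof. by apply/polyP => i; rewrite coef_derivn !coef0 mul0rn. Qed.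
Lemma wcoef_mderivn (P : R2) t i j :
  wcoef (map_poly (fun c : {poly F} => c^`(t)) P) i j = wcoef P (t + i) j *+ (t + i) ^_ t.
Proof. by rewrite /wcoef coef_map_id0 ?derivn0p // coef_derivn. Qed.

Lemma supp_xd (P : R2) Rl : supp P Rl -> supp (xd P) (fun i j => Rl i j.+1).
Proof.
move=> sP i j; rewrite wcoef_xd; case: (wcoef P i j.+1 =P 0) => [->|/eqP/sP//].
by rewrite mul0rn eqxx.
Qed.
Lemma supp_cd (P : R2) Rl : supp P Rl -> supp (cd P) (fun i j => Rl i.+1 j).
Proof.
move=> sP i j; rewrite wcoef_cd; case: (wcoef P i.+1 j =P 0) => [->|/eqP/sP//].
by rewrite mul0rn eqxx.
Qed.
Lemma supp_nderivn (P : R2) t Rl : supp P Rl -> supp (P^`N(t)) (fun i j => Rl i (t + j)%N).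
Proof.
move=> sP i j; rewrite wcoef_nderivn; case: (wcoef P i (t + j) =P 0) => [->|/eqP/sP//].
by rewrite mul0rn eqxx.
Qed.
Lemma supp_mderivn (P : R2) t Rl : supp P Rl ->
  supp (map_poly (fun c : {poly F} => c^`(t)) P) (fun i j => Rl (t + i)%N j).
Proof.
move=> sP i j; rewrite wcoef_mderivn; case: (wcoef P (t + i) j =P 0) => [->|/eqP/sP//].
by rewrite mul0rn eqxx.
Qed.


Lemma wcoef_out (P : R2) i j : (leq (size P) j || leq (size P`_j) i) -> wcoef P i j = 0.
Proof.
rewrite /wcoef; case/orP => h; last by rewrite nth_default.
by rewrite (nth_default _ h) coef0.
Qed.

Lemma wdelta_ge (P : R2) i j : wcoef P i j != 0 -> (p*i + q*j <= wdelta p q P)%N.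
Proof.
move=> nz.
have hj : (j < size P)%N.
  by rewrite ltnNge; apply/negP => h; move: nz; rewrite wcoef_out ?h ?eqxx.
have hi : leq i.+1 (size P`_j).
  by rewrite ltnNge; apply/negP => h; move: nz; rewrite wcoef_out ?h ?orbT ?eqxx.
rewrite /wdelta; apply: (leq_trans _ (leq_bigmax (Ordinal hj))).
exact: (@leq_bigmax_cond _ (fun i0 : 'I_(size P`_j) => wcoef P i0 j != 0) _ (Ordinal hi)).
Qed.

Lemma wdelta_le (P : R2) m :
  (forall i j, wcoef P i j != 0 -> (p*i+q*j <= m)%N) -> (wdelta p q P <= m)%N.
Proof.
move=> H; rewrite /wdelta; apply/bigmax_leqP => j _; apply/bigmax_leqP => i nz.
exact: H.
Qed.

Lemma wdelta_att (P : R2) : P != 0 ->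
  exists i j, wcoef P i j != 0 /\ (p*i+q*j)%N = wdelta p q P.
Proof.
move=> P0; apply: NNPP => nH.
have lt : forall i j, wcoef P i j != 0 -> (p*i+q*j < wdelta p q P)%N.
  move=> i j nz; rewrite ltn_neqAle wdelta_ge // andbT; apply/eqP => e.
  by apply: nH; exists i, j.
have [i0 [j0 nz0]] : exists i j, wcoef P i j != 0.
  apply: NNPP => nE; move/eqP: P0; apply; apply/polyP => j; apply/polyP => i.
  by rewrite !coef0; case: (wcoef P i j =P 0) => // /eqP h; exfalso; apply: nE; exists i, j.
have := lt _ _ nz0; set d := wdelta p q P => ld.
have d0 : (0 < d)%N by apply: leq_ltn_trans ld.
have : (d <= d.-1)%N.
  by apply: wdelta_le => i j /lt h; rewrite -ltnS prednK.
lia.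
Qed.

Lemma wcoef_wsymbol (P : R2) i j :
  wcoef (wsymbol p q P) i j =
  if (p*i+q*j == wdelta p q P)%N then wcoef P i j else 0.
Proof.
rewrite {1}/wcoef /wsymbol coef_poly; case: ltnP => hj; last first.
  by rewrite coef0 wcoef_out ?hj ?if_same.
rewrite coef_poly; case: ltnP => hi //.
by rewrite wcoef_out ?hi ?orbT ?if_same.
Qed.

Definition hom (P : R2) (w : nat) := supp P (fun i j => (p*i+q*j)%N = w).

Lemma hom_wsymbol (P : R2) : hom (wsymbol p q P) (wdelta p q P).
Proof. by move=> i j; rewrite wcoef_wsymbol; case: ifP => [/eqP//|_]; rewrite eqxx. Qed.

Lemma supp_le (P : R2) : supp P (fun i j => (p*i+q*j <= wdelta p q P)%N).
Proof. by move=> i j; apply: wdelta_ge. Qed.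

Lemma supp_rest (P : R2) :
  supp (P - wsymbol p q P) (fun i j => (p*i+q*j < wdelta p q P)%N).
Proof.
move=> i j; rewrite wcoefB wcoef_wsymbol; case: ifP => [_|/eqP ne]; first by rewrite subrr eqxx.
by rewrite subr0 => nz; rewrite ltn_neqAle wdelta_ge // andbT; apply/eqP.
Qed.

Lemma wsymbol_neq0 (P : R2) : P != 0 -> wsymbol p q P != 0.
Proof.
move=> /wdelta_att [i [j [nz e]]]; apply/eqP => h.
have := wcoef_wsymbol P i j; rewrite h wcoef0 e eqxx => e2.
by move: nz; rewrite -e2 eqxx.
Qed.


Lemma xdD (P Q : R2) : xd (P + Q) = xd P + xd Q.
Proof. exact: derivD. Qed.
Lemma cdD (P Q : R2) : cd (P + Q) = cd P + cd Q.
Proof.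
by apply/polyP => j; rewrite /cd coefD !coef_map_id0 ?deriv0 // coefD derivD.
Qed.

Definition term (P Q : R2) t := P^`N(t) * map_poly (fun c : {poly F} => c^`(t)) Q.

Lemma wmul_ext (P Q : R2) N : (size P <= N)%N -> wmul P Q = \sum_(t < N) term P Q t.
Proof.
move=> h; rewrite /wmul (big_ord_widen N (term P Q) h) big_mkcond /=.
apply: eq_bigr => t _; case: ltnP => // ht.
by rewrite /term nderivn_poly0 // mul0r.
Qed.

Lemma wmul_split (P Q : R2) : wmul P Q =
  P * Q + xd P * cd Q + \sum_(t < size P) term P Q t.+2.
Proof.
rewrite (@wmul_ext P Q (size P).+2) //. rewrite big_ord_recl big_ord_recl addrA.
congr (_ + _ + _).
- by rewrite /term nderivn0 map_poly_id.
- by rewrite /term nderivn1 /cd (eq_map_poly (@derivn1 _)).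
- by rewrite -addn2 leq_addr.
Qed.


Section Bracket.
Variables L M : R2.
Hypothesis hpq : (0 < p + q)%N.
Local Notation dL := (wdelta p q L).
Local Notation dM := (wdelta p q M).
Local Notation S := (fun i j => (p*i+q*j + (p+q) < dL + dM)%N).

Lemma supp_terms (P Q : R2) :
  (wdelta p q P + wdelta p q Q = dL + dM)%N ->
  supp (\sum_(t < size P) term P Q t.+2) S.
Proof.
move=> e; apply: supp_sum => t _; rewrite /term.
have h1 := supp_nderivn (t:=t.+2) (supp_le (P:=P)).
have h2 := supp_mderivn (t:=t.+2) (supp_le (P:=Q)).
apply: (suppM h1 h2).
move=> i1 j1 i2 j2 k1 k2; rewrite -e; nia.
Qed.

Lemma alg_aux (LM ML xA cA xB cB xl cl xm cm X1 X2 : R2) : LM = ML ->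
  LM + (xA + xl) * (cB + cm) + X1 = ML + (xB + xm) * (cA + cl) + X2 ->
  xA * cB - cA * xB =
  - ((xl * (cB + cm) + xA * cm) - (xm * (cA + cl) + xB * cl) + X1 - X2).
Proof.
move=> e H.
have -> : X1 = ML + (xB + xm) * (cA + cl) + X2 - LM - (xA + xl) * (cB + cm).
  by rewrite -H; ring.
rewrite e; ring.
Qed.

Lemma bracket : wmul L M = wmul M L ->
  xd (wsymbol p q L) * cd (wsymbol p q M) - cd (wsymbol p q L) * xd (wsymbol p q M) = 0.
Proof.
move=> H.
have hA := hom_wsymbol (P:=L); have hB := hom_wsymbol (P:=M).
have rL := supp_rest (P:=L); have rM := supp_rest (P:=M).
have lL := supp_le (P:=L); have lM := supp_le (P:=M).
have sX1 := supp_terms (P:=L) (Q:=M) erefl.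
have sX2 := supp_terms (P:=M) (Q:=L) (addnC _ _).
have exL : xd L = xd (wsymbol p q L) + xd (L - wsymbol p q L) by rewrite -xdD addrC subrK.
have exM : xd M = xd (wsymbol p q M) + xd (M - wsymbol p q M) by rewrite -xdD addrC subrK.
have ecL : cd L = cd (wsymbol p q L) + cd (L - wsymbol p q L) by rewrite -cdD addrC subrK.
have ecM : cd M = cd (wsymbol p q M) + cd (M - wsymbol p q M) by rewrite -cdD addrC subrK.
move: H; rewrite !wmul_split exL exM ecL ecM.
move=> /(alg_aux (mulrC _ _)) key.
apply/polyP => j; apply/polyP => i; rewrite !coef0; apply/eqP/negPn/negP => nz.
have hE : supp (xd (wsymbol p q L) * cd (wsymbol p q M) - cd (wsymbol p q L) * xd (wsymbol p q M))
    (fun i j => (p*i+q*j + (p+q) = dL + dM)%N).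
  apply: suppB.
    apply: (suppM (supp_xd hA) (supp_cd hB)) => i1 j1 i2 j2 k1 k2; nia.
  apply: (suppM (supp_cd hA) (supp_xd hB)) => i1 j1 i2 j2 k1 k2; nia.
have hS : supp (- ((xd (L - wsymbol p q L) * (cd (wsymbol p q M) + cd (M - wsymbol p q M)) +
       xd (wsymbol p q L) * cd (M - wsymbol p q M)) -
      (xd (M - wsymbol p q M) * (cd (wsymbol p q L) + cd (L - wsymbol p q L)) +
       xd (wsymbol p q M) * cd (L - wsymbol p q L)) +
      \sum_(t < size L) term L M t.+2 - \sum_(t < size M) term M L t.+2)) S.
  apply: suppN; apply: suppB => //; apply: suppD => //; apply: suppB; apply: suppD.
  - rewrite -ecM.
    apply: (suppM (supp_xd rL) (supp_cd lM)) => i1 j1 i2 j2 k1 k2; nia.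
  - apply: (suppM (supp_xd hA) (supp_cd rM)) => i1 j1 i2 j2 k1 k2; nia.
  - rewrite -ecL.
    apply: (suppM (supp_xd rM) (supp_cd lL)) => i1 j1 i2 j2 k1 k2; nia.
  - apply: (suppM (supp_xd hB) (supp_cd rL)) => i1 j1 i2 j2 k1 k2; nia.
have e1 := hE _ _ nz.
move: nz; rewrite key => nz; have := hS i j nz; lia.
Qed.

End Bracket.

Definition chi : R2 := ('X : {poly F})%:P.
Definition E (P : R2) : R2 := chi * cd P *+ p + 'X * xd P *+ q.

Lemma wcoef_E (P : R2) i j : wcoef (E P) i j = wcoef P i j *+ (p*i + q*j).
Proof.
rewrite /E wcoefD !wcoefMn /wcoef coefCM.
have -> : ('X * (cd P)`_j)`_i = P`_j`_i *+ i.
  rewrite coefXM /cd coef_map_id0 ?deriv0 //; case: i => [|i] /=.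
    by rewrite mulr0n.
  by rewrite coef_deriv.
have -> : ('X * xd P)`_j`_i = P`_j`_i *+ j.
  rewrite coefXM; case: j => [|j] /=; first by rewrite coef0 mulr0n.
  by rewrite /xd coef_deriv coefMn.
by rewrite -!mulrnA -mulrnDr mulnC [(j * q)%N]mulnC.
Qed.

Lemma cdM (P Q : R2) : cd (P * Q) = cd P * Q + P * cd Q.
Proof.
apply/polyP => j; rewrite /cd coef_map_id0 ?deriv0 // !coefD !coefM.
rewrite (big_morph _ (@derivD _) (@deriv0 _)) -big_split; apply: eq_bigr => a _ /=.
by rewrite derivM !coef_map_id0 ?deriv0.
Qed.

Lemma xdM (P Q : R2) : xd (P * Q) = xd P * Q + P * xd Q.
Proof. exact: derivM. Qed.

Lemma der_exp (D : R2 -> R2) :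
  (forall P Q, D (P * Q) = D P * Q + P * D Q) ->
  forall P k, D (P ^+ k.+1) = D P * P ^+ k *+ k.+1.
Proof.
move=> HD P; elim=> [|k IH]; first by rewrite expr1 expr0 mulr1.
by rewrite exprSr HD IH exprSr; ring.
Qed.

Lemma EM (P Q : R2) : E (P * Q) = E P * Q + P * E Q.
Proof. rewrite /E cdM xdM; ring. Qed.

Lemma euler (P : R2) w : hom P w -> E P = P *+ w.
Proof.
move=> hP; apply/polyP => j; apply/polyP => i.
rewrite -[((E P)`_j)`_i]/(wcoef (E P) i j) wcoef_E coefMn coefMn.
rewrite -[(P`_j)`_i]/(wcoef P i j).
by case: (wcoef P i j =P 0) => [->|/eqP/hP ->]; rewrite ?mul0rn.
Qed.

Hypothesis char0 : [pchar F] =i pred0.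

Lemma hom_root (g : R2) k w : hom (g ^+ k.+1) w -> g != 0 ->
  forall i j, wcoef g i j != 0 -> ((p*i+q*j) * k.+1 = w)%N.
Proof.
move=> hg g0 i j nz.
have e1 := euler hg; rewrite (der_exp EM) in e1.
have : (E g *+ k.+1) * g ^+ k = (g *+ w) * g ^+ k.
  by rewrite mulrnAl e1 exprSr mulrnAl mulrC.
move/(mulIf (expf_neq0 k g0)) => e2.
have := congr1 (fun P : R2 => wcoef P i j) e2; rewrite /= !wcoefMn wcoef_E -mulrnA.
exact: mulrn_injc.
Qed.

End W.

Section Fac.
Variable F : closedFieldType.
Local Notation R2 := {poly {poly F}}.
Variables p' q' : nat.
Hypothesis p'0 : (0 < p')%N.
Hypothesis cop : coprime p' q'.

Definition U : R2 := ('X^q')%:P.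
Definition V : R2 := 'X^p'.
Definition H m (Q : {poly F}) : R2 :=
  \sum_(t < m.+1) (Q`_t)%:P%:P * U ^+ (m - t) * V ^+ t.

Lemma wcoef_mono (c : F) a b i j :
  wcoef (c%:P%:P * U ^+ a * V ^+ b) i j =
  if (i == q' * a)%N && (j == p' * b)%N then c else 0.
Proof.
rewrite /U /V -rmorphXn -!exprM -rmorphM /wcoef coefMXn.
case: ltnP => hj.
  have -> : (j == p' * b)%N = false by apply/negbTE; rewrite neq_ltn hj.
  by rewrite coef0 andbF.
rewrite coefC; case: (j - p' * b =P 0)%N => [e|ne]; last first.
  have -> : (j == p' * b)%N = false by apply/eqP => e; apply: ne; rewrite e subnn.
  by rewrite coef0 andbF.
have -> : j = (p' * b)%N by apply/eqP; rewrite eqn_leq hj -subn_eq0 e.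
rewrite eqxx andbT coefCM coefXn; case: eqP; by rewrite ?mulr1 ?mulr0.
Qed.

Lemma Hfac m (Q : {poly F}) (k : F) : (size Q <= m.+1)%N ->
  H m.+1 (Q * ('X - k%:P)) = H m Q * (V - k%:P%:P * U).
Proof.
move=> hQ.
have ce : forall t, (Q * ('X - k%:P))`_t = (if t == 0%N then 0 else Q`_t.-1) - Q`_t * k.
  by move=> t; rewrite mulrBr coefB coefMX coefMC.
rewrite /H.
transitivity (\sum_(t < m.+2) ((if (t : nat) == 0%N then 0 else (Q`_t.-1)%:P%:P) * U ^+ (m.+1 - t) * V ^+ t)
  - \sum_(t < m.+2) ((Q`_t)%:P%:P * U ^+ (m.+1 - t) * V ^+ t) * k%:P%:P).
  rewrite -sumrB; apply: eq_bigr => t _; rewrite ce !rmorphB !rmorphM /=.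
  by case: ifP => _; rewrite ?rmorph0; ring.
rewrite big_ord_recl /= mul0r mul0r add0r.
rewrite [X in _ - X]big_ord_recr /= nth_default // polyC0 polyC0 !mul0r addr0.
rewrite mulrBr; congr (_ - _).
  rewrite mulr_suml; apply: eq_bigr => t _.
  rewrite /bump /= add1n add0n subSS exprSr; ring.
rewrite mulr_suml; apply: eq_bigr => t _ /=.
rewrite subSn; last by rewrite -ltnS ltn_ord.
rewrite exprS; ring.
Qed.


Lemma poly_neq0_coef (R : nzRingType) (P : {poly R}) : P != 0 -> exists i, P`_i != 0.
Proof.
move=> P0; apply: NNPP => nE; move/eqP: P0; apply; apply/polyP => i.
by rewrite coef0; case: (P`_i =P 0) => // /eqP h; exfalso; apply: nE; exists i.
Qed.

Lemma unit_const (P : R2) : P \is a GRing.unit -> exists2 c : F, c != 0 & P = c%:P%:P.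
Proof.
rewrite poly_unitE => /andP [/eqP s1 u0].
move: u0; rewrite poly_unitE => /andP [/eqP s2 _].
have e1 : P = (P`_0)%:P by apply: size1_polyC; rewrite s1.
have e2 : P`_0 = (P`_0`_0)%:P by apply: size1_polyC; rewrite s2.
exists (P`_0`_0); last by rewrite {1}e1 {1}e2.
apply/eqP => h; move: s2; rewrite e2 h polyC0 size_poly0.
by [].
Qed.

Lemma factor_g (g : R2) (Ng : nat) :
  Ng = (size g).-1 -> (0 < Ng)%N ->
  supp g (fun i j => (p'*i + q'*j = q'*Ng)%N) ->
  g`_0 != 0 -> wcoef g 0 Ng != 0 -> birreducible g ->
  Ng = p' /\ exists c k, c != 0 /\ g = c%:P%:P * (V - k%:P%:P * U).
Proof.
move=> eNg Ng0 hg g0 lc0 [gn0 gnu irr].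
have [e he] := poly_neq0_coef g0.
have pe := hg e 0%N he; rewrite muln0 addn0 in pe.
have dNg : (p' %| Ng)%N by rewrite -(Gauss_dvdr _ cop) -pe dvdn_mulr.
set r := (Ng %/ p')%N.
have hNg : Ng = (r * p')%N by rewrite divnK.
have r0 : (0 < r)%N by move: Ng0; rewrite hNg muln_gt0 => /andP[].
have param : forall i j, wcoef g i j != 0 ->
    exists t, [/\ (t <= r)%N, i = (q' * (r - t))%N & j = (p' * t)%N].
  move=> i j nz.
  have jle : (j <= Ng)%N.
    have sg : size g = Ng.+1 by move: Ng0; rewrite eNg; case: (size g).
    rewrite -ltnS -sg ltnNge; apply/negP => h; move: nz; rewrite wcoef_out ?eqxx //.
    by rewrite h.
  have hij := hg i j nz.
  have e1 : (p' * i = q' * (Ng - j))%N by nia.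
  have dj : (p' %| j)%N.
    rewrite -(dvdn_subr jle dNg) -(Gauss_dvdr _ cop) -e1; exact: dvdn_mulr.
  exists (j %/ p')%N; set t := (j %/ p')%N.
  have ej : j = (t * p')%N by rewrite divnK.
  have tle : (t <= r)%N by rewrite -(leq_pmul2r p'0) -ej -hNg.
  split => //; last by rewrite mulnC.
  apply/eqP; rewrite -(eqn_pmul2l p'0) e1 hNg ej; apply/eqP; nia.
pose c t := wcoef g (q' * (r - t)) (p' * t).
pose P0 := \poly_(t < r.+1) c t.
have rep : g = H r P0.
  apply/polyP => j; apply/polyP => i.
  rewrite -[(g`_j)`_i]/(wcoef g i j) -[((H r P0)`_j)`_i]/(wcoef (H r P0) i j).
  rewrite /H wcoef_sum.
  under eq_bigr => t _ do rewrite wcoef_mono coef_poly ltn_ord.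
  case: (boolP [exists t : 'I_r.+1, (i == q' * (r - t))%N && (j == p' * t)%N]).
    case/existsP => t0 /andP [/eqP hi /eqP hj].
    rewrite (bigD1 t0) //= hi hj !eqxx /= big1 ?addr0 //.
    move=> t nt; case: ifP => // /andP [_ /eqP ht]; exfalso; move: nt.
    suff : t = t0 by move=> ->; rewrite eqxx.
    by apply: val_inj; apply/eqP; rewrite -(eqn_pmul2l p'0) -ht.
  rewrite negb_exists => /forallP hn.
  rewrite big1; last by move=> t _; move: (hn t); case: ifP.
  case: (wcoef g i j =P 0) => // /eqP nz; exfalso.
  have [t [tle hi hj]] := param _ _ nz.
  have := hn (Ordinal (tle : (t < r.+1)%N)); by rewrite /= hi hj !eqxx.
have cr : c r != 0 by rewrite /c subnn muln0 mulnC -hNg.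
have sP0 : size P0 = r.+1 by rewrite size_poly_eq.
have [k rk] : exists k, root P0 k.
  by apply/closed_rootP; rewrite sP0 eqSS -lt0n.
have [Q0 eQ0] := factor_theorem P0 k rk.
have Q0n0 : Q0 != 0 by apply/eqP => h; move: sP0; rewrite eQ0 h mul0r size_poly0.
have sQ0 : size Q0 = r.
  by move: sP0; rewrite eQ0 size_mul ?polyXsubC_eq0 // size_XsubC addn2 => /eqP; rewrite eqSS => /eqP.
have [m em] : exists m, r = m.+1 by exists r.-1; rewrite prednK.
have eg : g = H m Q0 * (V - k%:P%:P * U).
  by rewrite rep eQ0 em Hfac // -em sQ0.
have eD : V - k%:P%:P * U = 'X^p' - (k%:P * 'X^q')%:P by rewrite /V /U rmorphM.
have sD : size (V - k%:P%:P * U) = p'.+1 by rewrite eD size_XnsubC.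
case: (irr _ _ eg) => [/unit_const [c0 c00 ec0]|]; last first.
  by rewrite poly_unitE sD eqSS => /andP [/eqP h]; move: p'0; rewrite h.
have gE : g = c0%:P%:P * (V - k%:P%:P * U) by rewrite eg ec0.
split; last by exists c0, k.
rewrite eNg gE mul_polyC size_scale ?sD //.
by rewrite polyC_eq0.
Qed.

End Fac.

Lemma gtsize (R : nzSemiRingType) (P : {poly R}) i : P`_i != 0 -> (i < size P)%N.
Proof. by rewrite ltnNge; apply: contra => h; rewrite nth_default. Qed.

Lemma const_of_coef (R : nzSemiRingType) (P : {poly R}) :
  (forall i, (0 < i)%N -> P`_i = 0) -> P = (P`_0)%:P.
Proof.
move=> h; apply: size1_polyC; apply/leq_sizeP => j; case: j => // j _; exact: h.
Qed.

Section H.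
Variable R : idomainType.
Hypothesis c0 : [pchar R] =i pred0.

Lemma lc_deriv (P : {poly R}) : lead_coef P^`() = lead_coef P *+ (size P).-1.
Proof.
case sP : (size P) => [|s].
  by move/eqP: sP; rewrite size_poly_eq0 => /eqP ->; rewrite deriv0 lead_coef0 mul0rn.
case: s sP => [|s] sP.
  have -> : P = (P`_0)%:P by apply: size1_polyC; rewrite sP.
  by rewrite derivC lead_coef0 mulr0n.
have lc0 : lead_coef P != 0 by rewrite lead_coef_eq0 -size_poly_eq0 sP.
have nz : P^`()`_s != 0.
  rewrite coef_deriv mulrn_eq0c // negb_or /=; move: lc0; by rewrite /lead_coef sP.
have sd : size P^`() = s.+1.
  apply/eqP; rewrite eqn_leq gtsize // andbT -ltnS -sP lt_size_deriv //.
  by rewrite -size_poly_eq0 sP.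
by rewrite /lead_coef sd /= coef_deriv /lead_coef sP.
Qed.

Lemma LD (T S : {poly R}) : T^`() * S = T * S^`() -> S != 0 ->
  (size T < size S)%N -> T = 0.
Proof.
move=> e S0 lt; apply/eqP; apply: contraLR lt => T0; rewrite -leqNgt.
have := congr1 lead_coef e; rewrite !lead_coefM !lc_deriv.
rewrite mulrnAl mulrnAr => /(mulrn_injc c0) h.
rewrite leq_eqVlt; apply/orP; left; apply/eqP.
have sT : (0 < size T)%N by rewrite size_poly_gt0.
have sS : (0 < size S)%N by rewrite size_poly_gt0.
rewrite -(prednK sT) -(prednK sS) h //.
by rewrite mulf_neq0 // lead_coef_eq0.
Qed.

Lemma Xn_split (P : {poly R}) : P != 0 ->
  exists m P1, P = P1 * 'X^m /\ P1`_0 != 0.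
Proof.
move: {2}(size P) (leqnn (size P)) => s; elim: s P => [|s IH] P.
  by rewrite leqn0 size_poly_eq0 => ->.
move=> sP P0; case: (P`_0 =P 0) => [e|/eqP ne]; last by exists 0%N, P; rewrite expr0 mulr1.
have : root P 0 by rewrite /root horner_coef0 e.
case/factor_theorem => P' eP; rewrite subr0 in eP.
have P'0 : P' != 0 by apply: contraNneq P0 => h; rewrite eP h mul0r.
have : (size P' <= s)%N.
  by rewrite -ltnS (leq_trans _ sP) // eP size_mulX // ltnSn.
move/IH/(_ P'0) => [m [P1 [e1 n1]]]; exists m.+1, P1; split => //.
by rewrite eP e1 exprSr mulrA.
Qed.

End H.

Lemma coef_XsubC_exp (R : comNzRingType) (x : R) n :
  (('X - x%:P) ^+ n.+1)`_n = - (x *+ n.+1).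
Proof.
elim: n => [|n IH]; first by rewrite expr1 coefB coefX coefC /= sub0r.
rewrite exprSr mulrBr coefB coefMX coefMC /= IH.
have -> : (('X - x%:P) ^+ n.+1)`_n.+1 = 1.
  have := monic_exp n.+1 (monicXsubC x); rewrite monicE /lead_coef size_exp_XsubC /=.
  by move/eqP.
by rewrite mul1r [x *+ n.+2]mulrSr opprD.
Qed.

Lemma wcoef_CX (F : fieldType) (e : F) m i j :
  wcoef (e%:P%:P * 'X^m) i j = if (i == 0%N) && (j == m) then e else 0.
Proof.
rewrite /wcoef coefCM coefXn; case: eqP => _; rewrite ?andbT ?andbF ?mulr1 ?mulr0.
  by rewrite coefC.
by rewrite coef0.
Qed.

Lemma mulrnI_c (R : idomainType) (c0 : [pchar R] =i pred0) (x y : R) n :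
  (0 < n)%N -> x *+ n = y *+ n -> x = y.
Proof.
move=> n0 e; apply/eqP; rewrite -subr_eq0.
have : (x - y) *+ n == 0 by rewrite mulrnBl e subrr.
by rewrite mulrn_eq0c // => /orP [/eqP n00|//]; rewrite n00 in n0.
Qed.

Lemma lc_mulrn (R : idomainType) (P : {poly R}) w : lead_coef (P *+ w) = lead_coef P *+ w.
Proof. by rewrite -scaler_nat lead_coefZ mulr_natl. Qed.

Lemma ar1 (a b c : nat) : (a + b = c)%N -> b = c -> a = 0%N.
Proof. lia. Qed.

Lemma ar2 (p' d i0 J q' : nat) : (0 < d)%N ->
  (p' * d * i0 = J * (q' * d))%N -> (q' * J = i0 * p')%N.
Proof.
move=> d0 h; apply/eqP; rewrite -(eqn_pmul2r d0); apply/eqP.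
lia.
Qed.

Theorem mainTheorem5 (F : closedFieldType) (char0 : [pchar F] =i pred0)
  (n : nat) (L : {poly {poly F}}) :
  (0 < n)%N -> size L = n.+1 -> lead_coef L = 1 -> L`_n.-1 = 0 ->
  forall p q : nat, (0 < p + q)%N ->
  wdelta p q L = (q * n)%N ->
  (exists a b : nat, [/\ wcoef L a b != 0, (a, b) != (0%N, n)
                       & (p * a + q * b = q * n)%N]) ->
  forall g : {poly {poly F}}, birreducible g ->
  (exists k : nat, wsymbol p q L = g ^+ k) ->
  forall M : {poly {poly F}}, M != 0 -> wmul L M = wmul M L ->
  exists2 c : F, c != 0 & exists m : nat, wsymbol p q M = c%:P%:P * g ^+ m.
Proof.
move=> n0 sL lcL Ln1 p q pq0 dL [a [b [ab0 abn abw]]] g irr [k eA] M M0 comm.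
have c2 : [pchar {poly F}] =i pred0 by move=> x; rewrite pchar_poly char0.
have c3 : [pchar {poly {poly F}}] =i pred0 by move=> x; rewrite pchar_poly c2.
set A := wsymbol p q L in eA.
have hA : hom p q A (q * n) by rewrite -dL; exact: (@hom_wsymbol F p q L).
have Ln : L`_n = 1 by rewrite -lcL /lead_coef sL.
have wL : forall i, wcoef L i n = (i == 0%N)%:R by move=> i; rewrite /wcoef Ln coef1.
have wAab : wcoef A a b != 0 by rewrite /A wcoef_wsymbol abw dL eqxx.
have p0 : (0 < p)%N.
  rewrite lt0n; apply/negP => /eqP p0.
  have q0 : (0 < q)%N by move: pq0; rewrite p0.
  move: abw; rewrite p0 mul0n add0n => /eqP; rewrite eqn_pmul2l // => /eqP eb.
  move: abn ab0; rewrite eb wL; case: (a) => [|a'] /= h; [by move: h; rewrite eqxx | by rewrite eqxx].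
have wA0n : wcoef A 0 n = 1 by rewrite /A wcoef_wsymbol muln0 add0n dL eqxx wL.
have An : A`_n = 1.
  apply/polyP => i; rewrite coef1 -[(A`_n)`_i]/(wcoef A i n) /A wcoef_wsymbol wL dL.
  by case: i => [|i]; [rewrite muln0 add0n eqxx | case: ifP].
have sA : size A = n.+1.
  apply/eqP; rewrite eqn_leq; apply/andP; split.
    by rewrite /A /wsymbol -sL; exact: size_poly.
  by apply: gtsize; rewrite An oner_neq0.
have lcA : lead_coef A = 1 by rewrite /lead_coef sA An.
have [k' ek] : exists k', k = k'.+1.
  case: k eA => [|k'] eA; last by exists k'.
  exfalso; move: wA0n; rewrite eA expr0 /wcoef coef1.
  rewrite (negbTE (lt0n_neq0 n0)) mulr0n coef0 => /eqP; by rewrite eq_sym oner_eq0.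
subst k.
have g0 : g != 0 by case: irr.
set Ng := (size g).-1.
have nNg : n = (Ng * k'.+1)%N by have := size_exp g k'.+1; rewrite -eA sA.
have Ng0 : (0 < Ng)%N by move: n0; rewrite nNg muln_gt0 => /andP[].
have lcg : lead_coef g ^+ k'.+1 = 1 by rewrite -lead_coef_exp -eA lcA.
have lcg_c : lead_coef g = ((lead_coef g)`_0)%:P.
  apply: size1_polyC; have := size_exp (lead_coef g) k'.+1.
  rewrite lcg size_poly1 /= => /esym/eqP; rewrite muln_eq0 orbF.
  by case: (size (lead_coef g)) => [|[]].
have cg0 : (lead_coef g)`_0 != 0.
  apply: contraNneq g0 => h; rewrite -lead_coef_eq0; apply/eqP.
  by rewrite lcg_c h polyC0.
set cg := (lead_coef g)`_0 in cg0 lcg_c *.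
have wgN : wcoef g 0 Ng = cg by [].
have hg : supp g (fun i j => (p*i+q*j = q*Ng)%N).
  move=> i j nz.
  have hk : hom p q (g ^+ k'.+1) (q * n) by rewrite -eA.
  have := hom_root char0 hk g0 nz.
  by rewrite nNg mulnA => /eqP; rewrite eqn_pmul2r // => /eqP.
have g00 : g`_0 != 0.
  apply/negP => /eqP e0.
  have : root g 0 by rewrite /root horner_coef0 e0.
  case/factor_theorem => g1; rewrite subr0 => eg.
  case: (irr) => _ _ /(_ _ _ eg) [/unit_const [c c0 ec]|]; last first.
    by rewrite poly_unitE size_polyX => /andP [].
  have eA2 : A = (c ^+ k'.+1)%:P%:P * 'X^(k'.+1).
    by rewrite eA eg ec exprMn -!rmorphXn.
  move: wAab wA0n abn; rewrite eA2 !wcoef_CX /=.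
  case: ifP => [/andP [/eqP ea /eqP eb] _|_]; last by rewrite eqxx.
  case: ifP => [/eqP en _|_]; last by move=> /eqP; rewrite eq_sym oner_eq0.
  by rewrite ea eb en eqxx.
set d := gcdn p q.
have d0 : (0 < d)%N by rewrite gcdn_gt0 p0.
set p' := (p %/ d)%N; set q' := (q %/ d)%N.
have ep : p = (p' * d)%N by rewrite divnK // dvdn_gcdl.
have eq' : q = (q' * d)%N by rewrite divnK // dvdn_gcdr.
have p'0 : (0 < p')%N by move: p0; rewrite ep muln_gt0 => /andP[].
have cop : coprime p' q'.
  rewrite /coprime; apply/eqP.
  have : (gcdn p' q' * d = 1 * d)%N by rewrite muln_gcdl -ep -eq' mul1n.
  by move/eqP; rewrite eqn_pmul2r // => /eqP.
have hg' : supp g (fun i j => (p'*i + q'*j = q'*Ng)%N).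
  move=> i j /hg; rewrite {1}ep {1 2}eq' => h; apply/eqP; rewrite -(eqn_pmul2r d0); apply/eqP.
  nia.
have lc0 : wcoef g 0 Ng != 0 by rewrite wgN.
have [eNg [cc [kk [cc0 eg]]]] :=
  factor_g p'0 cop (erefl _ : Ng = (size g).-1) Ng0 hg' g00 lc0 irr.
case: (posnP q) => [q0 | qpos].
  exfalso.
  have p'1 : p' = 1%N by rewrite /p' /d q0 gcdn0 divnn p0.
  have q'0 : q' = 0%N by rewrite /q' q0 div0n.
  have nk : n = k'.+1 by rewrite nNg eNg p'1 mul1n.
  have eg2 : g = cc%:P%:P * ('X - (kk%:P)%:P).
    by rewrite eg /V /U p'1 q'0 expr1 expr0 polyC1 mulr1.
  have eA3 : A = (cc ^+ n)%:P%:P * ('X - (kk%:P)%:P) ^+ n.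
    by rewrite eA eg2 exprMn -!rmorphXn nk.
  have w0 : wcoef A 0 n.-1 = 0.
    by rewrite /A wcoef_wsymbol dL q0 !mul0n addn0 muln0 eqxx /wcoef Ln1 coef0.
  have kk0 : kk = 0.
    move: w0; rewrite eA3 /wcoef coefCM nk /= coef_XsubC_exp.
    rewrite coefCM coefN coefMn coefC /= => /eqP.
    rewrite mulf_eq0 expf_eq0 (negbTE cc0) andbF /= oppr_eq0 mulrn_eq0c //= => /eqP.
    by [].
  move: wAab abn; rewrite eA3 kk0 polyC0 polyC0 subr0 wcoef_CX.
  by case: ifP => [/andP [/eqP -> /eqP ->]|_]; rewrite ?eqxx.
set B := wsymbol p q M.
have B0 : B != 0 by exact: wsymbol_neq0.
have hB : hom p q B (wdelta p q M) by exact: (@hom_wsymbol F p q M).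
set wB := wdelta p q M in hB.
case: (posnP wB) => [wB0 | wBpos].
  have eB : B = ((B`_0)`_0)%:P%:P.
    apply/polyP => j; apply/polyP => i; rewrite !coefC.
    case: (wcoef B i j =P 0) => [h|/eqP nz].
      rewrite -[(B`_j)`_i]/(wcoef B i j) h; case: j h => [|j] h /=; last by rewrite coef0.
      by rewrite coefC; case: i h => [|i] h //=; move: h; rewrite /wcoef => ->.
    have := hB _ _ nz; rewrite wB0 => /eqP; rewrite addn_eq0 !muln_eq0.
    rewrite (negbTE (lt0n_neq0 p0)) (negbTE (lt0n_neq0 qpos)) /= => /andP [/eqP -> /eqP ->].
    by rewrite /= coefC.
  exists ((B`_0)`_0).
    by apply: contraNneq B0 => h; rewrite eB h !polyC0.
  by exists 0%N; rewrite expr0 mulr1.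
have Br := bracket pq0 comm.
have EA := euler hA.
have EB := euler hB.
have key : xd A * (B *+ wB) - (A *+ (q * n)) * xd B = 0.
  transitivity (chi F * (xd A * cd B - cd A * xd B) *+ p).
    by rewrite -EA -EB /E; ring.
  by rewrite Br mulr0 mul0rn.
have xdA : xd A = xd g * g ^+ k' *+ k'.+1 by rewrite eA; exact: (der_exp (@xdM F)).
have R2rel : xd g * B *+ wB = g * xd B *+ (q * Ng).
  have e1 : ((xd g * B *+ wB) *+ k'.+1) * g ^+ k' = ((g * xd B *+ (q * Ng)) *+ k'.+1) * g ^+ k'.
    transitivity (xd A * (B *+ wB)); first by rewrite xdA; ring.
    move/eqP: key; rewrite subr_eq0 => /eqP ->.
    by rewrite eA nNg exprS; ring.
  move/(mulIf (expf_neq0 k' g0)): e1; exact: (mulrnI_c c3).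
have qNg0 : (0 < q * Ng)%N by rewrite muln_gt0 qpos.
have B00 : B`_0 != 0.
  apply/negP => /eqP e0.
  have [m0 [B1 [eB1 nB1]]] := Xn_split B0.
  case: m0 eB1 => [|m1] eB1.
    by move: nB1; rewrite -[B1]mulr1 -(expr0 'X) -eB1 e0 eqxx.
  have xdB : xd B = xd B1 * 'X^(m1.+1) + B1 * ('X^m1 *+ m1.+1).
    by rewrite eB1 /xd derivM derivXn.
  move: R2rel; rewrite xdB {1}eB1.
  have -> : xd g * (B1 * 'X^(m1.+1)) *+ wB = ((xd g * B1 * 'X) *+ wB) * 'X^m1.
    by rewrite exprS; ring.
  have -> : g * (xd B1 * 'X^(m1.+1) + B1 * ('X^m1 *+ m1.+1)) *+ (q * Ng) =
      ((g * xd B1 * 'X + (g * B1) *+ m1.+1) *+ (q * Ng)) * 'X^m1.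
    by rewrite exprS; ring.
  move/(mulIf (monic_neq0 (monicXn _ m1))) => e2.
  have := congr1 (fun P : {poly {poly F}} => P`_0) e2.
  rewrite !coefMn coefD coefMX coefMX coefMn coef0M /= mul0rn add0r => /esym/eqP.
  rewrite -mulrnA mulrn_eq0c // coef0M muln_eq0 mulf_eq0 (negbTE g00) (negbTE nB1).
  by rewrite -[(q * Ng)%N == 0%N]negbK -lt0n qNg0.
have [i0 hi0] := poly_neq0_coef B00.
have pi0 := hB _ _ hi0; rewrite muln0 addn0 in pi0.
set J := (size B).-1.
have sB : size B = J.+1 by rewrite /J prednK // size_poly_gt0.
have lcB_lc : lead_coef (xd B) = lead_coef B *+ J by rewrite /xd lc_deriv // sB.
have lcg_d : lead_coef (xd g) = lead_coef g *+ Ng by rewrite /xd lc_deriv.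
have eJ : wB = (J * q)%N.
  have := congr1 lead_coef R2rel; rewrite !lc_mulrn !lead_coefM lcB_lc lcg_d.
  rewrite mulrnAl mulrnAr -!mulrnA => /(mulrn_injc c2).
  have -> : lead_coef g * lead_coef B != 0 by rewrite mulf_neq0 // lead_coef_eq0.
  move=> /(_ isT) h; apply/eqP; rewrite -(eqn_pmul2l Ng0); apply/eqP.
  rewrite h; ring.
have J0 : (0 < J)%N by move: wBpos; rewrite eJ muln_gt0 => /andP[].
have lcB_c : lead_coef B = ((lead_coef B)`_0)%:P.
  apply: const_of_coef => i ipos; apply/eqP; apply/negP => /negP nz.
  have qJ : (q * J)%N = wB by rewrite eJ mulnC.
  have := ar1 (hB i J nz) qJ => /eqP.
  by rewrite muln_eq0 (negbTE (lt0n_neq0 p0)) (negbTE (lt0n_neq0 ipos)).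
have cb0 : (lead_coef B)`_0 != 0.
  apply: contraNneq B0 => h; rewrite -lead_coef_eq0; apply/eqP.
  by rewrite lcB_c h polyC0.
set cb := (lead_coef B)`_0 in cb0 lcB_c *.
have dJ : (p' %| J)%N.
  rewrite -(Gauss_dvdr _ cop); apply/dvdnP; exists i0.
  apply: (ar2 d0); by rewrite -ep -eq' pi0 eJ.
set m := (J %/ p')%N.
have eJm : J = (m * Ng)%N by rewrite eNg /m divnK.
have m0 : (0 < m)%N by move: J0; rewrite eJm muln_gt0 => /andP[].
have rel2 : xd g * B *+ m = g * xd B.
  apply: (mulrnI_c c3 qNg0); rewrite -R2rel -mulrnA; congr (_ *+ _).
  by rewrite eJ eJm; ring.
have [m' em] : exists m', m = m'.+1 by exists m.-1; rewrite prednK.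
set S := g ^+ m.
have hS : xd S * B = S * xd B.
  rewrite /S em (der_exp (@xdM F)).
  transitivity (g ^+ m' * (xd g * B *+ m'.+1)); first by ring.
  have rel2' : xd g * B *+ m'.+1 = g * xd B by rewrite -em.
  by rewrite rel2' exprS; ring.
have S0 : S != 0 by rewrite expf_neq0.
have sS : size S = size B.
  have := size_exp g m; rewrite -/S -/Ng mulnC -eJm => e.
  by rewrite sB -e prednK // size_poly_gt0.
set T := lead_coef S *: B - lead_coef B *: S.
have hT : T^`() * S = T * S^`().
  rewrite /T derivB !derivZ -!mul_polyC.
  have hS' : B * xd S = xd B * S by rewrite mulrC hS mulrC.
  apply/eqP; rewrite -subr_eq0; apply/eqP.
  transitivity ((lead_coef S)%:P * (xd B * S - B * xd S)); first by rewrite /xd; ring.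
  by rewrite hS' subrr mulr0.
have sT : (size T < size S)%N.
  rewrite sS sB ltnS; apply/leq_sizeP => j hj.
  rewrite /T coefB !coefZ.
  case: (ltnP J j) => hJ.
    have hB1 : B`_j = 0 by rewrite nth_default // sB.
    have hS1 : S`_j = 0 by rewrite nth_default // sS sB.
    by rewrite hB1 hS1 !mulr0 subrr.
  have -> : j = J by apply/eqP; rewrite eqn_leq hj hJ.
  have -> : B`_J = lead_coef B by [].
  have -> : S`_J = lead_coef S by rewrite /lead_coef sS.
  by rewrite mulrC subrr.
have T0 : T = 0 by apply: (LD c2) hT S0 sT.
have lcS : lead_coef S = (cg ^+ m)%:P by rewrite /S lead_coef_exp lcg_c rmorphXn.
exists ((cg ^+ m)^-1 * cb).
  by rewrite mulf_neq0 // invr_eq0 expf_neq0.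
exists m.
move/eqP: T0; rewrite /T subr_eq0 lcS lcB_c => /eqP e.
have := congr1 (fun P => ((cg ^+ m)^-1)%:P *: P) e.
rewrite /= !scalerA -!rmorphM /= mulVf ?expf_neq0 // scale1r => ->.
by rewrite -mul_polyC.
Qed.
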